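(* For every graph $G$ and every $S\subseteq V(G)$, $S$ is well-linked if and only if $S$ is externally-well-linked.
   Context: A set $S\subseteq V(G)$ is well-linked if for every pair $A,B\subseteq S$ with $|A|=|B|$ there exist $|A|$ pairwise vertex-disjoint paths from $A$ to $B$. It is externally-well-linked if for every such pair these $|A|$ vertex-disjoint paths from $A$ to $B$ can moreover be chosen with no internal vertex in $S$. *)

(* Defs.v *)
From mathcomp Require Import all_boot.
Set Implicit Arguments. Unset Strict Implicit. Unset Printing Implicit Defensive.

Section Graphs.
Variable T : finType.
Variable e : rel T.

Definition simple_graph : Prop := symmetric e /\ irreflexive e.

(* A path: a nonempty sequence of pairwise distinct vertices, consecutive
   ones adjacent.  A single vertex is a (trivial) path. *)
Definition is_gpath (p : seq T) : bool :=
  if p is x :: s then path e x s && uniq p else false.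

Definition pstart (p : seq T) : option T :=
  if p is x :: _ then Some x else None.
Definition pend (p : seq T) : option T :=
  if p is x :: s then Some (last x s) else None.

Definition interior (p : seq T) : seq T :=
  if p is x :: s then behead (belast x s) else [::].

Definition path_from_to (A B : {set T}) (p : seq T) : Prop :=
  is_gpath p /\
  (exists2 a, pstart p = Some a & a \in A) /\
  (exists2 b, pend p = Some b & b \in B).

Definition linkage (A B : {set T}) (Q : seq T -> Prop) : Prop :=
  exists P : 'I_#|A| -> seq T,
    (forall i, path_from_to A B (P i) /\ Q (P i)) /\
    (forall i j, i != j -> [disjoint P i & P j]).

Definition well_linked (S : {set T}) : Prop :=
  forall A B : {set T}, A \subset S -> B \subset S -> #|A| = #|B| ->
    linkage A B (fun _ => True).

Definition externally_well_linked (S : {set T}) : Prop :=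
  forall A B : {set T}, A \subset S -> B \subset S -> #|A| = #|B| ->
    linkage A B (fun p => forall v, v \in interior p -> v \notin S).

End Graphs.

(* Main.v *)
Require Import Defs.
From mathcomp Require Import all_boot.
Set Implicit Arguments. Unset Strict Implicit. Unset Printing Implicit Defensive.

Section Aux.
Variable T : finType.
Variable e : rel T.

Lemma pstart_mem (p : seq T) x : pstart p = Some x -> x \in p.
Proof. by case: p => //= y s [->]; rewrite inE eqxx. Qed.

Lemma pend_mem (p : seq T) x : pend p = Some x -> x \in p.
Proof. case: p => //= y s [<-]; exact: mem_last. Qed.

Lemma interior_mem (p : seq T) v : v \in interior p -> v \in p.
Proof.
case: p => //= x [|y s] //= Hv.
by rewrite inE (mem_belast Hv) orbT.
Qed.

Lemma interior_start (p : seq T) x v : uniq p -> pstart p = Some x ->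
  v \in interior p -> v != x.
Proof.
case: p => //= y [|z s] //= Hu [<-] Hv.
apply/eqP => Evy; subst v.
move: Hu => /andP[H _]; by rewrite (mem_belast Hv) in H.
Qed.

Lemma interior_end (p : seq T) x v : uniq p -> pend p = Some x ->
  v \in interior p -> v != x.
Proof.
case: p => //= y [|z s] //= Hu [<-] Hv.
have : uniq (z :: s) by case/andP: Hu.
rewrite lastI rcons_uniq => /andP[H _].
by apply/eqP => Evy; subst v; rewrite Hv in H.
Qed.

Lemma wl_ewl (S : {set T}) : well_linked e S -> externally_well_linked e S.
Proof.
move=> WL A B sA sB cAB.
pose C := S :\: (A :|: B).
have dAC : A :&: C = set0.
  by apply/setP => x; rewrite !inE; case: (x \in A); rewrite ?andbF.
have dBC : B :&: C = set0.
  by apply/setP => x; rewrite !inE; case: (x \in B); rewrite ?andbF ?orbT.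
have sD : A :|: C \subset S.
  by apply/subsetP => x; rewrite !inE => /orP[/(subsetP sA)|/andP[]].
have sE : B :|: C \subset S.
  by apply/subsetP => x; rewrite !inE => /orP[/(subsetP sB)|/andP[]].
have cDE : #|A :|: C| = #|B :|: C|.
  by rewrite !cardsU dAC dBC cAB.
have [P [HP Hdis]] := WL _ _ sD sE cDE.
set D := A :|: C in P HP Hdis.
have same : forall i j x, x \in P i -> x \in P j -> i = j.
  move=> i j x xi xj; apply/eqP; apply: contraT => nij.
  by rewrite (disjointFr (Hdis _ _ nij) xi) in xj.
have surj : forall x, x \in D -> exists i, pstart (P i) = Some x.
  pose F := fun i => pstart (P i).
  have Finj : injective F.
    move=> i j Fij; have [[_ [[a Ha _] _]] _] := HP i.
    apply: (same _ _ a); first exact: pstart_mem.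
    by apply: pstart_mem; rewrite -/(F j) -Fij.
  have sub : [set F i | i in 'I_#|D|] \subset [set Some x | x in D].
    apply/subsetP => o /imsetP[i _ ->].
    have [[_ [[a Ha aD] _]] _] := HP i.
    by rewrite /F Ha; apply/imsetP; exists a.
  have : [set F i | i in 'I_#|D|] == [set Some x | x in D].
    rewrite eqEcard sub /= !card_imset //; last by move=> ?? [].
    by rewrite card_ord.
  move=> /eqP Heq x xD.
  have : Some x \in [set F i | i in 'I_#|D|] by rewrite Heq; apply/imsetP; exists x.
  by case/imsetP => i _ ->; exists i.
have surjE : forall x, x \in B :|: C -> exists i, pend (P i) = Some x.
  pose F := fun i => pend (P i).
  have Finj : injective F.
    move=> i j Fij; have [[_ [_ [a Ha _]]] _] := HP i.
    apply: (same _ _ a); first exact: pend_mem.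
    by apply: pend_mem; rewrite -/(F j) -Fij.
  have sub : [set F i | i in 'I_#|D|] \subset [set Some x | x in B :|: C].
    apply/subsetP => o /imsetP[i _ ->].
    have [[_ [_ [a Ha aD]]] _] := HP i.
    by rewrite /F Ha; apply/imsetP; exists a.
  have : [set F i | i in 'I_#|D|] == [set Some x | x in B :|: C].
    rewrite eqEcard sub /= !card_imset //; last by move=> ?? [].
    by rewrite card_ord cDE.
  move=> /eqP Heq x xD.
  have : Some x \in [set F i | i in 'I_#|D|] by rewrite Heq; apply/imsetP; exists x.
  by case/imsetP => i _ ->; exists i.
have clean : forall i v, v \in interior (P i) -> v \notin S.
  move=> i v vi; apply/negP => vS.
  have [[Hg [[a Ha _] [b Hb _]]] _] := HP i.
  have Hu : uniq (P i) by move: Hg; case: (P i) => // ?? /andP[].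
  have vP := interior_mem vi.
  have : v \in D \/ v \in B :|: C.
    rewrite !inE; case: (v \in A) => /=; first by left.
    case: (v \in B) => /=; first by right.
    by left; rewrite vS.
  case=> [vD|vE].
    have [j Hj] := surj v vD.
    have eij := same _ _ _ vP (pstart_mem Hj); subst j.
    by move: (interior_start Hu Hj vi); rewrite eqxx.
  have [j Hj] := surjE v vE.
  have eij := same _ _ _ vP (pend_mem Hj); subst j.
  by move: (interior_end Hu Hj vi); rewrite eqxx.
have Hg : forall k : 'I_#|A|, exists i, pstart (P i) = Some (enum_val k).
  move=> k; apply: surj; rewrite inE; apply/orP; left; exact: enum_valP.
have [g Hg'] := fin_all_exists Hg.
exists (fun k => P (g k)); split.
  move=> k; split; last exact: clean.
  have [[Hgp [[a Ha aD] [b Hb bE]]] _] := HP (g k).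
  split; first by [].
  split; first by exists (enum_val k) => //; exact: enum_valP.
  exists b => //.
  move: bE; rewrite inE => /orP[//|bC].
  have bD : b \in D by rewrite inE bC orbT.
  have [j Hj] := surj b bD.
  have eij := same _ _ _ (pend_mem Hb) (pstart_mem Hj); subst j.
  move: Hj; rewrite Hg' => -[bk].
  have := enum_valP k; rewrite bk => bA.
  by move: bC; rewrite !inE bA.
move=> k k' nkk'; apply: Hdis.
apply: contra nkk' => /eqP gkk'.
have := Hg' k; rewrite gkk' Hg' => -[] /enum_val_inj ->; by [].
Qed.

Lemma ewl_wl (S : {set T}) : externally_well_linked e S -> well_linked e S.
Proof.
move=> H A B sA sB cAB; have [P [HP Hd]] := H A B sA sB cAB.
by exists P; split => // i; split => //; case: (HP i).
Qed.

End Aux.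

Theorem lemma15 (T : finType) (e : rel T) (S : {set T}) :
  simple_graph e ->
  (well_linked e S <-> externally_well_linked e S).
Proof.
move=> _; split; [exact: wl_ewl | exact: ewl_wl].
Qed.
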